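(* For every integer $n\ge 3$ and every $x>0$, $$\frac{n-2}{n-1}<\frac{\bigl(\psi_2^{(n)}(x)\bigr)^2}{\psi_2^{(n-1)}(x)\,\psi_2^{(n+1)}(x)}<\frac{n}{n+1}.$$ Both bounds are sharp: the lower constant $\frac{n-2}{n-1}$ cannot be replaced by any larger constant and the upper constant $\frac{n}{n+1}$ cannot be replaced by any smaller constant, uniformly in $x>0$.
   Context: For an integer $n\ge 2$ and $x>0$, the poly-double gamma function is defined by $$\psi_2^{(n)}(x)=(-1)^{n+1}\,n!\sum_{k=0}^{\infty}\frac{1+k}{(x+k)^{n+1}} .$$ *)

(* Defs.v *)
From Stdlib Require Import Reals.
From Coquelicot Require Import Coquelicot.
Open Scope R_scope.

(* Coquelicot's [Series] is the (total) sum of the series; the series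
   converges for n >= 2, x > 0. *)
Definition psi2 (n : nat) (x : R) : R :=
  (-1) ^ (n + 1) * INR (Factorial.fact n) *
  Series (fun k : nat => (1 + INR k) / (x + INR k) ^ (n + 1)).

Definition psi2_ratio (n : nat) (x : R) : R :=
  (psi2 n x) ^ 2 / (psi2 (n - 1) x * psi2 (n + 1) x).

(* Main.v *)
Require Import Defs.
From Stdlib Require Import Reals Lra Lia Factorial.
From Coquelicot Require Import Coquelicot.
Open Scope R_scope.

Ltac Rfield := match goal with |- ?a = ?b => change (@eq R a b) end; field.

Definition E (c : R) (M : nat) (t : R) : R := t ^ M * exp (- (c * t)).

Fixpoint P (c : R) (M : nat) (t : R) : R :=
  match M with
  | O => exp (- (c * t)) / c
  | S M' => t ^ (S M') * exp (- (c * t)) / c + INR (S M') / c * P c M' t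
  end.

Lemma P_deriv c M t : c <> 0 -> is_derive (P c M) t (- E c M t).
Proof.
  intros Hc. induction M as [|M IH].
  - unfold E. simpl. auto_derive; [auto|]. Rfield. auto.
  - assert (H1 : is_derive (fun t => t^(S M)*exp(-(c*t))/c) t
                   (INR (S M) * t^M * exp(-(c*t))/c - t^(S M)*exp(-(c*t)))).
    { auto_derive; [auto|]. change (match M with 0%nat => 1 | S _ => INR M + 1 end) with (INR (S M)). simpl pow. Rfield. auto. }
    assert (H2 : is_derive (fun t => INR (S M)/c * P c M t) t (INR (S M)/c * (- E c M t))).
    { apply (is_derive_scal (P c M) t (INR (S M) / c)). exact IH. }
    pose proof (is_derive_plus _ _ _ _ _ H1 H2) as H3.
    change (is_derive (fun t => t^(S M)*exp(-(c*t))/c + INR (S M)/c * P c M t) t (- E c (S M) t)).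
    replace (- E c (S M) t) with (plus (INR (S M) * t^M * exp(-(c*t))/c - t^(S M)*exp(-(c*t))) (INR (S M)/c * (- E c M t))).
    + exact H3.
    + unfold plus; simpl; unfold E. simpl. Rfield. auto.
Qed.

Lemma P_at0 c M : c <> 0 -> P c M 0 = INR (fact M) / c ^ (S M).
Proof.
  intros Hc. induction M as [|M IH].
  - simpl. rewrite Rmult_0_r, Ropp_0, exp_0. field. auto.
  - change (P c (S M) 0) with (0 ^ (S M) * exp (-(c*0))/c + INR (S M)/c * P c M 0). rewrite IH. rewrite pow_i by lia. rewrite fact_simpl, mult_INR.
    simpl pow. field. split; auto. apply pow_nonzero; auto.
Qed.

Lemma P_nonneg c M t : 0 < c -> 0 <= t -> 0 <= P c M t.
Proof.
  intros Hc Ht. induction M as [|M IH]; cbn [P].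
  - apply Rle_mult_inv_pos; [apply Rlt_le, exp_pos | auto].
  - apply Rplus_le_le_0_compat.
    + apply Rle_mult_inv_pos; auto. apply Rmult_le_pos; [apply pow_le; auto | apply Rlt_le, exp_pos].
    + apply Rmult_le_pos; auto. apply Rle_mult_inv_pos; auto. apply pos_INR.
Qed.

Lemma exp_neg_mono a b t : a <= b -> 0 <= t -> exp (- (b * t)) <= exp (- (a * t)).
Proof.
  intros Hab Ht. destruct (Req_dec (a*t) (b*t)) as [E1|E1].
  - rewrite E1; lra.
  - apply Rlt_le, exp_increasing. assert (a * t <= b * t) by (apply Rmult_le_compat_r; auto). lra.
Qed.

Lemma P_mono_c x c M t : 0 < x -> x <= c -> 0 <= t -> P c M t <= P x M t.
Proof.
  intros Hx Hxc Ht. assert (Hc : 0 < c) by lra.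
  assert (Hi : / c <= / x) by (apply Rinv_le_contravar; auto).
  assert (He := exp_neg_mono x c t Hxc Ht).
  induction M as [|M IH]; cbn [P]; unfold Rdiv.
  - apply Rmult_le_compat; auto; try (apply Rlt_le, exp_pos); left; apply Rinv_0_lt_compat; auto.
  - apply Rplus_le_compat.
    + apply Rmult_le_compat; auto.
      * apply Rmult_le_pos; [apply pow_le; auto | apply Rlt_le, exp_pos].
      * left; apply Rinv_0_lt_compat; auto.
      * apply Rmult_le_compat_l; [apply pow_le; auto| auto].
    + apply Rmult_le_compat; auto.
      * apply Rmult_le_pos; [apply pos_INR | left; apply Rinv_0_lt_compat; auto].
      * apply P_nonneg; auto.
      * apply Rmult_le_compat_l; [apply pos_INR | auto].
Qed.

Lemma sum_f_R0_ge_last f k : (forall i, 0 <= f i) -> f k <= sum_f_R0 f k.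
Proof.
  intros Hf. destruct k; simpl; [lra|].
  assert (0 <= sum_f_R0 f k).
  { clear -Hf. induction k; simpl; [apply Hf | specialize (Hf (S k)); lra]. }
  lra.
Qed.

Lemma pow_exp_bound c k t : 0 < c -> 0 < t ->
  t ^ k * exp (- (c * t)) <= INR (fact (S k)) / (c ^ (S k) * t).
Proof.
  intros Hc Ht.
  assert (H1 := exp_ge_taylor (c * t) (S k) ltac:(nra)).
  assert (H2 := sum_f_R0_ge_last (fun i => (c * t) ^ i / INR (fact i)) (S k)
                  ltac:(intros i; apply Rle_mult_inv_pos; [apply pow_le; nra | apply INR_fact_lt_0])).
  cbv beta in H2. set (F := INR (fact (S k))) in *.
  assert (HF : 0 < F) by apply INR_fact_lt_0.
  rewrite exp_Ropp.
  assert (Hpos : 0 < exp (c * t)) by apply exp_pos.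
  assert (Hck : 0 < c ^ k) by (apply pow_lt; auto).
  assert (Htk : 0 < t ^ k) by (apply pow_lt; auto).
  assert (H3 : (c * t) ^ (S k) <= F * exp (c * t)).
  { assert (H4 : (c * t) ^ S k / F <= exp (c * t)) by lra.
    apply (Rmult_le_compat_l F) in H4; [|lra].
    replace (F * ((c * t) ^ S k / F)) with ((c*t)^(S k)) in H4 by (field; lra). lra. }
  rewrite Rpow_mult_distr in H3. simpl pow in H3.
  apply (Rmult_le_reg_l (c * c^k * t * exp (c * t))).
  { apply Rmult_lt_0_compat; [|auto]. apply Rmult_lt_0_compat; [|auto]. apply Rmult_lt_0_compat; auto. }
  replace (c * c ^ k * t * exp (c * t) * (t ^ k * / exp (c * t))) with (c * c^k * (t * t^k)) by (field; lra).
  replace (c * c ^ k * t * exp (c * t) * (F / (c ^ S k * t))) with (F * exp (c * t)).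
  - lra.
  - simpl pow. field. repeat split; lra.
Qed.

Lemma P_inf_bound c M : 0 < c -> exists Q, forall b, 0 < b -> P c M b <= Q / b.
Proof.
  intros Hc. induction M as [|M [Q HQ]].
  - exists (INR (fact 1) / (c ^ 1) / c). intros b Hb. cbn [P].
    assert (H := pow_exp_bound c 0 b Hc Hb). rewrite pow_O, Rmult_1_l in H.
    unfold Rdiv in *. 
    apply Rle_trans with (INR (fact 1) * / (c ^ 1 * b) * / c).
    + apply Rmult_le_compat_r; [left; apply Rinv_0_lt_compat; auto| auto].
    + right. field. lra.
  - exists (INR (fact (S (S M))) / c ^ (S (S M)) / c + INR (S M) / c * Q).
    intros b Hb. cbn [P].
    assert (H := pow_exp_bound c (S M) b Hc Hb).
    assert (H2 := HQ b Hb).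
    assert (Hic : 0 < / c) by (apply Rinv_0_lt_compat; auto).
    assert (HS : 0 <= INR (S M) / c) by (apply Rle_mult_inv_pos; [apply pos_INR|auto]).
    apply Rle_trans with (INR (fact (S (S M))) / (c ^ S (S M) * b) / c + INR (S M) / c * (Q / b)).
    + apply Rplus_le_compat.
      * unfold Rdiv. apply Rmult_le_compat_r; [lra|]. exact H.
      * apply Rmult_le_compat_l; auto.
    + right. field. split; [lra|]. split; [apply pow_nonzero; lra| lra].
Qed.

Lemma P_lim_inf c M : 0 < c -> forall eps, 0 < eps -> exists B, 0 < B /\ forall b, B <= b -> P c M b < eps.
Proof.
  intros Hc eps He. destruct (P_inf_bound c M Hc) as [Q HQ].
  exists (Rabs Q / eps + 1). split.
  { assert (0 <= Rabs Q / eps) by (apply Rle_mult_inv_pos; [apply Rabs_pos|auto]). lra. }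
  intros b Hb.
  assert (H0 : 0 <= Rabs Q / eps) by (apply Rle_mult_inv_pos; [apply Rabs_pos|auto]).
  assert (Hb0 : 0 < b) by lra.
  apply Rle_lt_trans with (Q / b); [apply HQ; auto|].
  apply Rle_lt_trans with (Rabs Q / b).
  { unfold Rdiv. apply Rmult_le_compat_r; [left; apply Rinv_0_lt_compat; auto| apply Rle_abs]. }
  apply (Rmult_lt_reg_r b); auto. unfold Rdiv. rewrite Rmult_assoc, Rinv_l, Rmult_1_r by lra.
  assert (Rabs Q = Rabs Q / eps * eps) by (field; lra).
  assert (Rabs Q / eps * eps < b * eps) by (apply Rmult_lt_compat_r; lra). lra.
Qed.

Lemma E_cont c M t : continuous (E c M) t.
Proof. apply (@ex_derive_continuous R_AbsRing R_NormedModule). unfold E. auto_derive. auto. Qed.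

Lemma E_RInt c M a b : c <> 0 -> is_RInt (E c M) a b (P c M a - P c M b).
Proof.
  intros Hc.
  assert (H := is_RInt_derive (fun t => - P c M t) (E c M) a b).
  replace (P c M a - P c M b) with (minus (- P c M b) (- P c M a)).
  - apply H.
    + intros t _. assert (H1 := is_derive_opp (P c M) t (-E c M t) (P_deriv c M t Hc)).
      replace (E c M t) with (opp (- E c M t)) by (unfold opp; simpl; ring). exact H1.
    + intros t _. apply E_cont.
  - unfold minus, plus, opp; simpl. ring.
Qed.

Lemma E_nonneg c M t : 0 <= t -> 0 <= E c M t.
Proof. intros Ht. unfold E. apply Rmult_le_pos; [apply pow_le; auto | apply Rlt_le, exp_pos]. Qed.

Lemma P_decr c M a b : 0 < c -> 0 <= a <= b -> P c M b <= P c M a.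
Proof.
  intros Hc Hab. assert (H := E_RInt c M a b ltac:(lra)).
  assert (0 <= P c M a - P c M b); [|lra].
  apply (is_RInt_ge_0 (E c M) a b); try lra; auto.
  intros t Ht. apply E_nonneg. lra.
Qed.

Lemma P_near0 c M a : 0 < c -> 0 <= a <= 1 -> P c M 0 - P c M a <= a.
Proof.
  intros Hc Ha. assert (H := E_RInt c M 0 a ltac:(lra)).
  assert (Hk := is_RInt_const 0 a 1).
  replace a with (scal (a - 0) 1) at 2 by (unfold scal; simpl; unfold mult; simpl; ring).
  apply (is_RInt_le (E c M) (fun _ => 1) 0 a); try lra; auto.
  intros t Ht. unfold E.
  assert (t ^ M <= 1) by (rewrite <- (pow1 M); apply pow_incr; lra).
  assert (exp (- (c * t)) <= 1).
  { rewrite <- exp_0. destruct (Req_dec (c*t) 0) as [->|]. rewrite Ropp_0; lra.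
    left. apply exp_increasing. assert (0 < c * t) by (apply Rmult_lt_0_compat; lra). lra. }
  assert (0 <= t ^ M) by (apply pow_le; lra).
  assert (0 <= exp (- (c*t))) by (apply Rlt_le, exp_pos).
  nra.
Qed.

Definition IInt (f : R -> R) (I : R) : Prop :=
  forall eps, 0 < eps -> exists d B, 0 < d /\ d < B /\
    forall a b, 0 < a <= d -> B <= b -> ex_RInt f a b /\ Rabs (RInt f a b - I) < eps.

Lemma IInt_combine f I g J eps1 eps2 : IInt f I -> IInt g J -> 0 < eps1 -> 0 < eps2 ->
  exists d B, 0 < d /\ d < B /\ forall a b, 0 < a <= d -> B <= b ->
    (ex_RInt f a b /\ Rabs (RInt f a b - I) < eps1) /\
    (ex_RInt g a b /\ Rabs (RInt g a b - J) < eps2).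
Proof.
  intros Hf Hg H1 H2. destruct (Hf eps1 H1) as (d1 & B1 & Hd1 & HdB1 & H1').
  destruct (Hg eps2 H2) as (d2 & B2 & Hd2 & HdB2 & H2').
  exists (Rmin d1 d2), (Rmax B1 B2). repeat split.
  - apply Rmin_pos; auto.
  - apply Rle_lt_trans with d1; [apply Rmin_l|]. apply Rlt_le_trans with B1; [auto|apply Rmax_l].
  - apply H1'; [split; [lra| apply Rle_trans with (Rmin d1 d2); [lra|apply Rmin_l]] | apply Rle_trans with (Rmax B1 B2); [apply Rmax_l|lra]].
  - apply H1'; [split; [lra| apply Rle_trans with (Rmin d1 d2); [lra|apply Rmin_l]] | apply Rle_trans with (Rmax B1 B2); [apply Rmax_l|lra]].
  - apply H2'; [split; [lra| apply Rle_trans with (Rmin d1 d2); [lra|apply Rmin_r]] | apply Rle_trans with (Rmax B1 B2); [apply Rmax_r|lra]].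
  - apply H2'; [split; [lra| apply Rle_trans with (Rmin d1 d2); [lra|apply Rmin_r]] | apply Rle_trans with (Rmax B1 B2); [apply Rmax_r|lra]].
Qed.

Lemma IInt_plus f I g J : IInt f I -> IInt g J -> IInt (fun t => f t + g t) (I + J).
Proof.
  intros Hf Hg eps He.
  destruct (IInt_combine f I g J (eps/2) (eps/2) Hf Hg ltac:(lra) ltac:(lra)) as (d & B & Hd & HdB & H).
  exists d, B. split; [auto|split; [auto|]]. intros a b Ha Hb. destruct (H a b Ha Hb) as [[E1 F1] [E2 F2]].
  split.
  - apply (ex_RInt_plus f g); auto.
  - rewrite (RInt_plus f g) by auto. unfold plus; simpl.
    replace (RInt f a b + RInt g a b - (I + J)) with ((RInt f a b - I) + (RInt g a b - J)) by ring.
    eapply Rle_lt_trans; [apply Rabs_triang|]. lra.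
Qed.

Lemma IInt_scal f I k : IInt f I -> IInt (fun t => k * f t) (k * I).
Proof.
  intros Hf eps He.
  destruct (Hf (eps / (Rabs k + 1))) as (d & B & Hd & HdB & H).
  { apply Rdiv_lt_0_compat; auto. assert (0 <= Rabs k) by apply Rabs_pos. lra. }
  exists d, B. split; [auto|split; [auto|]]. intros a b Ha Hb. destruct (H a b Ha Hb) as [E1 F1].
  split.
  - apply (ex_RInt_scal f); auto.
  - rewrite (RInt_scal f) by auto. unfold scal; simpl; unfold mult; simpl.
    replace (k * RInt f a b - k * I) with (k * (RInt f a b - I)) by ring.
    rewrite Rabs_mult.
    assert (0 <= Rabs k) by apply Rabs_pos.
    apply Rle_lt_trans with (Rabs k * (eps / (Rabs k + 1))).
    + apply Rmult_le_compat_l; lra.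
    + apply Rlt_le_trans with ((Rabs k + 1) * (eps / (Rabs k + 1))).
      * apply Rmult_lt_compat_r; [apply Rdiv_lt_0_compat; lra | lra].
      * right. field. lra.
Qed.

Lemma IInt_ext f g I : (forall t, 0 < t -> f t = g t) -> IInt f I -> IInt g I.
Proof.
  intros Hfg Hf eps He. destruct (Hf eps He) as (d & B & Hd & HdB & H).
  exists d, B. split; [auto|split; [auto|]]. intros a b Ha Hb. destruct (H a b Ha Hb) as [E1 F1].
  assert (Hab : a < b) by lra.
  assert (Hext : forall x, Rmin a b < x < Rmax a b -> f x = g x).
  { intros x Hx. rewrite Rmin_left, Rmax_right in Hx by lra. apply Hfg. lra. }
  split.
  - apply (ex_RInt_ext f); auto.
  - rewrite <- (RInt_ext f g) by auto. auto.
Qed.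

Lemma IInt_le f g I J : (forall t, 0 < t -> f t <= g t) -> IInt f I -> IInt g J -> I <= J.
Proof.
  intros Hfg Hf Hg. apply Rnot_lt_le. intros HJI.
  set (eps := (I - J) / 2).
  destruct (IInt_combine f I g J eps eps Hf Hg ltac:(unfold eps; lra) ltac:(unfold eps; lra))
    as (d & B & Hd & HdB & H).
  destruct (H d B ltac:(lra) ltac:(lra)) as [[E1 F1] [E2 F2]].
  assert (RInt f d B <= RInt g d B) by (apply RInt_le; auto; try lra; intros x Hx; apply Hfg; lra).
  apply Rabs_def2 in F1. apply Rabs_def2 in F2. unfold eps in *. lra.
Qed.

Lemma IInt_unique f I J : IInt f I -> IInt f J -> I = J.
Proof.
  intros H1 H2. apply Rle_antisym; apply (IInt_le f f); auto; intros; lra.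
Qed.

Lemma IInt_ge_RInt f I c d : (forall t, 0 < t -> 0 <= f t) -> IInt f I -> 0 < c < d ->
  ex_RInt f c d -> RInt f c d <= I.
Proof.
  intros Hpos Hf Hcd Hex. apply Rnot_lt_le. intros HI.
  set (eps := (RInt f c d - I) / 2).
  destruct (Hf eps ltac:(unfold eps; lra)) as (d0 & B & Hd & HdB & H).
  set (a := Rmin d0 c). set (b := Rmax B d).
  assert (Ha : 0 < a <= d0) by (unfold a; split; [apply Rmin_pos; lra| apply Rmin_l]).
  assert (Hac : a <= c) by (unfold a; apply Rmin_r).
  assert (Hb : B <= b) by (unfold b; apply Rmax_l).
  assert (Hdb : d <= b) by (unfold b; apply Rmax_r).
  destruct (H a b Ha Hb) as [Ex F].
  assert (Ex1 : ex_RInt f a c) by (apply (ex_RInt_Chasles_1 f a c b); auto; lra).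
  assert (Ex2 : ex_RInt f c b) by (apply (ex_RInt_Chasles_2 f a c b); auto; lra).
  assert (Ex3 : ex_RInt f d b) by (apply (ex_RInt_Chasles_2 f c d b); auto; lra).
  rewrite <- (RInt_Chasles f a c b) in F by auto.
  rewrite <- (RInt_Chasles f c d b) in F by auto.
  unfold plus in F; simpl in F.
  assert (0 <= RInt f a c) by (apply RInt_ge_0; auto; intros; apply Hpos; lra).
  assert (0 <= RInt f d b) by (apply RInt_ge_0; auto; intros; apply Hpos; lra).
  apply Rabs_def2 in F. unfold eps in *. lra.
Qed.

Lemma IInt_deriv (G g : R -> R) (Ga Gb : R) :
  (forall t, 0 < t -> is_derive G t (g t)) -> (forall t, 0 < t -> continuous g t) ->
  (forall eps, 0 < eps -> exists d, 0 < d /\ forall a, 0 < a <= d -> Rabs (G a - Ga) < eps) ->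
  (forall eps, 0 < eps -> exists B, forall b, B <= b -> Rabs (G b - Gb) < eps) ->
  IInt g (Gb - Ga).
Proof.
  intros Hd Hc H0 Hinf eps He.
  destruct (H0 (eps/2) ltac:(lra)) as (d1 & Hd1 & H1).
  destruct (Hinf (eps/2) ltac:(lra)) as (B1 & H2).
  exists (Rmin d1 1), (Rmax B1 2). split; [|split].
  - apply Rmin_pos; lra.
  - apply Rle_lt_trans with 1; [apply Rmin_r|]. apply Rlt_le_trans with 2; [lra|apply Rmax_r].
  - intros a b Ha Hb.
    assert (Ha1 : a <= d1) by (apply Rle_trans with (Rmin d1 1); [lra|apply Rmin_l]).
    assert (Ha2 : a <= 1) by (apply Rle_trans with (Rmin d1 1); [lra|apply Rmin_r]).
    assert (Hb1 : B1 <= b) by (apply Rle_trans with (Rmax B1 2); [apply Rmax_l|lra]).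
    assert (Hb2 : 2 <= b) by (apply Rle_trans with (Rmax B1 2); [apply Rmax_r|lra]).
    assert (HI : is_RInt g a b (minus (G b) (G a))).
    { apply (is_RInt_derive G g).
      - intros x Hx. rewrite Rmin_left, Rmax_right in Hx by lra. apply Hd. lra.
      - intros x Hx. rewrite Rmin_left, Rmax_right in Hx by lra. apply Hc. lra. }
    split; [eexists; eauto|].
    rewrite (is_RInt_unique _ _ _ _ HI). unfold minus, plus, opp; simpl.
    specialize (H1 a ltac:(lra)). specialize (H2 b Hb1).
    replace (G b + - G a - (Gb - Ga)) with ((G b - Gb) - (G a - Ga)) by ring.
    eapply Rle_lt_trans; [apply Rabs_triang|]. rewrite Rabs_Ropp. lra.
Qed.

Definition sig (x : R) (m : nat) (k : nat) : R := (1 + INR k) / (x + INR k) ^ m.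

Lemma tele_sum n : sum_f_R0 (fun k => / ((INR k + 1) * (INR k + 2))) n = 1 - / (INR n + 2).
Proof.
  induction n as [|n IH].
  - simpl. field.
  - cbn [sum_f_R0]. rewrite IH. rewrite S_INR.
    assert (0 <= INR n) by apply pos_INR. field. lra.
Qed.

Lemma tele_is_series : is_series (fun k => / ((INR k + 1) * (INR k + 2))) 1.
Proof.
  apply is_series_Reals. intros eps He.
  destruct (archimed (/ eps)) as [H1 _].
  destruct (INR_unbounded (/ eps)) as [N HN].
  exists N. intros n Hn. rewrite tele_sum. unfold Rdist.
  replace (1 - / (INR n + 2) - 1) with (- / (INR n + 2)) by ring.
  rewrite Rabs_Ropp. rewrite Rabs_right.
  2:{ left. apply Rinv_0_lt_compat. assert (0 <= INR n) by apply pos_INR. lra. }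
  assert (INR N <= INR n) by (apply le_INR; lia).
  assert (Hinv : 0 < / eps) by (apply Rinv_0_lt_compat; lra).
  replace eps with (/ / eps) by (field; lra).
  apply Rinv_lt_contravar.
  - apply Rmult_lt_0_compat; auto. assert (0 <= INR n) by apply pos_INR. lra.
  - lra.
Qed.

Lemma sig_bound x m k : 0 < x -> (3 <= m)%nat ->
  0 <= sig x m k <= (2 / x ^ m + 12) * / ((INR k + 1) * (INR k + 2)).
Proof.
  intros Hx Hm. unfold sig.
  assert (Hk : 0 <= INR k) by apply pos_INR.
  assert (Hxm : 0 < x ^ m) by (apply pow_lt; auto).
  assert (Hpm : 0 < (x + INR k) ^ m) by (apply pow_lt; lra).
  split.
  { apply Rle_mult_inv_pos; lra. }
  destruct k as [|k].
  - simpl INR. rewrite Rplus_0_r. unfold Rdiv.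
    replace (2 * / x ^ m + 12) with (2 * / x^m + 12) by reflexivity.
    assert (0 < / x ^ m) by (apply Rinv_0_lt_compat; auto).
    replace (/ ((0 + 1) * (0 + 2))) with (/2) by field. rewrite Rplus_0_r. lra.
  - set (y := INR (S k)) in *.
    assert (Hy : 1 <= y) by (unfold y; rewrite S_INR; assert (0 <= INR k) by apply pos_INR; lra).
    assert (H3 : y ^ 3 <= (x + y) ^ m).
    { apply Rle_trans with ((x + y) ^ 3).
      - apply pow_incr; lra.
      - apply Rle_pow; [lra | auto]. }
    assert (Hy3 : 0 < y ^ 3) by (apply pow_lt; lra).
    apply Rle_trans with ((1 + y) / y ^ 3).
    + unfold Rdiv. apply Rmult_le_compat_l; [lra|]. apply Rinv_le_contravar; auto.
    + apply Rle_trans with (12 * / ((y + 1) * (y + 2))).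
      * apply (Rmult_le_reg_r (y^3 * ((y+1)*(y+2)))).
        { apply Rmult_lt_0_compat; auto. nra. }
        unfold Rdiv. replace ((1 + y) * / y ^ 3 * (y ^ 3 * ((y + 1) * (y + 2)))) with ((1+y)*((y+1)*(y+2))) by (field; lra).
        replace (12 * / ((y + 1) * (y + 2)) * (y ^ 3 * ((y + 1) * (y + 2)))) with (12 * y^3) by (field; lra).
        simpl. nra.
      * apply Rmult_le_compat_r.
        { left. apply Rinv_0_lt_compat. nra. }
        assert (0 < / x ^ m) by (apply Rinv_0_lt_compat; auto). unfold Rdiv. lra.
Qed.

Lemma ex_series_sig x m : 0 < x -> (3 <= m)%nat -> ex_series (sig x m).
Proof.
  intros Hx Hm.
  apply (ex_series_le (K := R_AbsRing) (V := R_CompleteNormedModule) _ (fun k => (2 / x ^ m + 12) * / ((INR k + 1) * (INR k + 2)))).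
  - intros k. destruct (sig_bound x m k Hx Hm) as [H1 H2].
    unfold norm; simpl. rewrite Rabs_right; lra.
  - apply (ex_series_scal_l (K := R_AbsRing) (V := R_NormedModule)). exists 1. apply tele_is_series.
Qed.

Lemma partial_le_series a n : (forall k, 0 <= a k) -> ex_series a -> sum_f_R0 a n <= Series a.
Proof.
  intros Hpos Hex. apply Series_correct in Hex. apply is_series_Reals in Hex.
  apply Rnot_lt_le. intros Hlt.
  destruct (Hex (sum_f_R0 a n - Series a) ltac:(lra)) as [N HN].
  specialize (HN (max N n) ltac:(lia)).
  assert (Hmono : forall p, sum_f_R0 a n <= sum_f_R0 a (n + p)).
  { induction p as [|p IH]. rewrite Nat.add_0_r; lra.
    rewrite Nat.add_succ_r. simpl. specialize (Hpos (S (n + p))). lra. }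
  assert (Hm := Hmono (max N n - n)%nat).
  replace (n + (max N n - n))%nat with (max N n) in Hm by lia.
  unfold Rdist in HN. apply Rabs_def2 in HN. lra.
Qed.

Lemma series_approx a eps : ex_series a -> 0 < eps -> exists N, Rabs (sum_f_R0 a N - Series a) < eps.
Proof.
  intros Hex He. apply Series_correct in Hex. apply is_series_Reals in Hex.
  destruct (Hex eps He) as [N HN]. exists N. apply HN. lia.
Qed.

Definition Lf (x t : R) : R := exp (- (x * t)) / (1 - exp (- t)) ^ 2.

Definition Wf (x : R) (M : nat) (t : R) : R := t ^ M * Lf x t.

Definition PSf (x : R) (M K : nat) (t : R) : R :=
  sum_f_R0 (fun k => (1 + INR k) * E (x + INR k) M t) K.

Lemma exp_shift x k t : exp (- ((x + INR k) * t)) = exp (- (x * t)) * exp (- t) ^ k.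
Proof.
  induction k as [|k IH].
  - simpl. rewrite Rplus_0_r. ring.
  - rewrite S_INR. replace (- ((x + (INR k + 1)) * t)) with (- ((x + INR k) * t) + - t) by ring.
    rewrite exp_plus, IH. simpl. ring.
Qed.

Lemma geom_sum q K : (1 - q) ^ 2 * sum_f_R0 (fun k => (1 + INR k) * q ^ k) K
  = 1 - (INR K + 2) * q ^ (S K) + (INR K + 1) * q ^ (S (S K)).
Proof.
  induction K as [|K IH].
  - simpl. ring.
  - cbn [sum_f_R0]. rewrite Rmult_plus_distr_l, IH. rewrite S_INR. simpl. ring.
Qed.

Lemma exp_neg_pos t : 0 < t -> 0 < exp (- t) < 1.
Proof.
  intros Ht. split; [apply exp_pos|]. rewrite <- exp_0. apply exp_increasing. lra.
Qed.

Lemma PSf_eq x M K t :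
  PSf x M K t = t ^ M * exp (- (x * t)) * sum_f_R0 (fun k => (1 + INR k) * exp (- t) ^ k) K.
Proof.
  unfold PSf, E. induction K as [|K IH].
  - cbn [sum_f_R0]. rewrite exp_shift. ring.
  - cbn [sum_f_R0]. rewrite IH, exp_shift. ring.
Qed.

Lemma tail_eq x M K t : 0 < t ->
  Wf x M t - PSf x M K t =
  t ^ M * exp (- (x * t)) * exp (- t) ^ (S K) * ((INR K + 2) - (INR K + 1) * exp (- t)) / (1 - exp (- t)) ^ 2.
Proof.
  intros Ht. destruct (exp_neg_pos t Ht) as [Hq0 Hq1].
  set (q := exp (- t)) in *.
  rewrite PSf_eq. unfold Wf, Lf. fold q.
  assert (Hs : sum_f_R0 (fun k => (1 + INR k) * q ^ k) K
     = (1 - (INR K + 2) * q ^ (S K) + (INR K + 1) * q ^ (S (S K))) / (1 - q) ^ 2).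
  { rewrite <- geom_sum. field. lra. }
  rewrite Hs. simpl. field. lra.
Qed.

Lemma tail_bounds x M K t : 0 < x -> 0 < t ->
  0 <= Wf x M t - PSf x M K t <=
  t ^ M * (INR K + 2) * exp (- t) ^ (S K) / (1 - exp (- t)) ^ 2.
Proof.
  intros Hx Ht. rewrite tail_eq by auto.
  destruct (exp_neg_pos t Ht) as [Hq0 Hq1]. set (q := exp (- t)) in *.
  assert (HK : 0 <= INR K) by apply pos_INR.
  assert (He : 0 < exp (- (x * t)) <= 1).
  { split; [apply exp_pos|]. rewrite <- exp_0. left. apply exp_increasing.
    assert (0 < x * t) by (apply Rmult_lt_0_compat; auto). lra. }
  assert (HtM : 0 <= t ^ M) by (apply pow_le; lra).
  assert (Hqk : 0 < q ^ S K) by (apply pow_lt; lra).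
  assert (Hd : 0 < (1 - q) ^ 2) by (apply pow_lt; lra).
  unfold Rdiv. split.
  - apply Rmult_le_pos; [| left; apply Rinv_0_lt_compat; auto].
    apply Rmult_le_pos; [| nra]. apply Rmult_le_pos; [|lra]. apply Rmult_le_pos; lra.
  - apply Rmult_le_compat_r; [left; apply Rinv_0_lt_compat; auto|].
    assert (0 <= t ^ M * exp (- (x * t)) <= t ^ M) by (split; [apply Rmult_le_pos; lra| nra]).
    assert (0 <= (INR K + 2 - (INR K + 1) * q) <= INR K + 2) by nra.
    assert (H1 : t ^ M * exp (- (x * t)) * q ^ S K * (INR K + 2 - (INR K + 1) * q)
               <= t ^ M * q ^ S K * (INR K + 2)).
    { apply Rle_trans with (t ^ M * q ^ S K * (INR K + 2 - (INR K + 1) * q)).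
      - apply Rmult_le_compat_r; [lra|]. apply Rmult_le_compat_r; lra.
      - apply Rmult_le_compat_l; [nra| lra]. }
    lra.
Qed.

Lemma Wf_cont x M t : 0 < t -> continuous (Wf x M) t.
Proof.
  intros Ht. apply (@ex_derive_continuous R_AbsRing R_NormedModule).
  unfold Wf, Lf. destruct (exp_neg_pos t Ht).
  auto_derive. apply Rgt_not_eq. assert (0 < 1 + - exp (- t)) by lra. nra.
Qed.

Lemma PSf_RInt x M K a b : 0 < x ->
  is_RInt (PSf x M K) a b
    (sum_f_R0 (fun k => (1 + INR k) * (P (x + INR k) M a - P (x + INR k) M b)) K).
Proof.
  intros Hx. induction K as [|K IH].
  - unfold PSf. simpl sum_f_R0.
    apply (is_RInt_scal (E (x + INR 0) M) a b (1 + INR 0)).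
    apply E_RInt. assert (0 <= INR 0) by apply pos_INR. lra.
  - unfold PSf. cbn [sum_f_R0].
    apply (is_RInt_plus (fun t => sum_f_R0 (fun k => (1 + INR k) * E (x + INR k) M t) K)
                        (fun t => (1 + INR (S K)) * E (x + INR (S K)) M t)).
    + exact IH.
    + apply (is_RInt_scal (E (x + INR (S K)) M) a b (1 + INR (S K))).
      apply E_RInt. assert (0 <= INR (S K)) by apply pos_INR. lra.
Qed.

Lemma sum_const_le f c K : (forall k, (k <= K)%nat -> f k <= c) -> sum_f_R0 f K <= c * (INR K + 1).
Proof.
  intros H. induction K as [|K IH].
  - simpl. specialize (H 0%nat (le_n 0)). lra.
  - cbn [sum_f_R0]. rewrite S_INR.
    assert (sum_f_R0 f K <= c * (INR K + 1)) by (apply IH; intros; apply H; lia).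
    specialize (H (S K) (le_n _)). lra.
Qed.

Lemma exp_pow_neg a n : exp (- a) ^ n = exp (- (a * INR n)).
Proof.
  induction n as [|n IH].
  - simpl. rewrite Rmult_0_r, Ropp_0, exp_0. reflexivity.
  - rewrite S_INR. simpl pow. rewrite IH, <- exp_plus. f_equal. ring.
Qed.

Lemma tail_small a b M K : 0 < a <= b ->
  forall t, a <= t <= b ->
  t ^ M * (INR K + 2) * exp (- t) ^ (S K) / (1 - exp (- t)) ^ 2 <=
  b ^ M * 4 / (a ^ 2 * (INR K + 1) * (1 - exp (- a)) ^ 2).
Proof.
  intros Hab t Ht.
  assert (HK : 0 <= INR K) by apply pos_INR.
  destruct (exp_neg_pos a ltac:(lra)) as [Ha0 Ha1].
  destruct (exp_neg_pos t ltac:(lra)) as [Ht0 Ht1].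
  assert (Hqa : exp (- t) <= exp (- a)).
  { destruct (Req_dec t a) as [->|]; [lra|]. left. apply exp_increasing. lra. }
  assert (H1 : t ^ M <= b ^ M) by (apply pow_incr; lra).
  assert (H2 : exp (- t) ^ S K <= exp (- a) ^ S K) by (apply pow_incr; lra).
  assert (H3 : (1 - exp (- a)) ^ 2 <= (1 - exp (- t)) ^ 2) by (apply pow_incr; lra).
  assert (H4 : exp (- a) ^ S K <= 2 / (a ^ 2 * (INR K + 1) ^ 2)).
  { rewrite exp_pow_neg, S_INR.
    assert (Hb := pow_exp_bound a 1 (INR K + 1) ltac:(lra) ltac:(lra)).
    simpl fact in Hb. simpl INR in Hb. rewrite pow_1 in Hb.
    assert (HK1 : 0 < INR K + 1) by lra.
    apply (Rmult_le_reg_l (INR K + 1)); auto.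
    eapply Rle_trans; [exact Hb|]. right. simpl. field. lra. }
  assert (Hd : 0 < (1 - exp (- a)) ^ 2) by (apply pow_lt; lra).
  assert (Hdt : 0 < (1 - exp (- t)) ^ 2) by (apply pow_lt; lra).
  assert (Hbm : 0 <= t ^ M) by (apply pow_le; lra).
  assert (Hqk : 0 <= exp (- t) ^ S K) by (apply pow_le; lra).
  apply Rle_trans with (b ^ M * (INR K + 2) * (2 / (a ^ 2 * (INR K + 1) ^ 2)) / (1 - exp (- a)) ^ 2).
  - unfold Rdiv. apply Rmult_le_compat.
    + apply Rmult_le_pos; [apply Rmult_le_pos; lra | lra].
    + left. apply Rinv_0_lt_compat; auto.
    + apply Rmult_le_compat; [apply Rmult_le_pos; lra | lra | apply Rmult_le_compat_r; lra | lra].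
    + apply Rinv_le_contravar; auto.
  - assert (0 < a ^ 2) by (apply pow_lt; lra).
    assert (0 <= b ^ M) by (apply pow_le; lra).
    unfold Rdiv. 
    replace (b ^ M * (INR K + 2) * (2 * / (a ^ 2 * (INR K + 1) ^ 2)) * / (1 - exp (- a)) ^ 2)
      with ((b ^ M * / (a ^ 2 * (INR K + 1) * (1 - exp (- a)) ^ 2)) * (2 * (INR K + 2) / (INR K + 1)))
      by (field; repeat split; lra).
    replace (b ^ M * 4 * / (a ^ 2 * (INR K + 1) * (1 - exp (- a)) ^ 2))
      with ((b ^ M * / (a ^ 2 * (INR K + 1) * (1 - exp (- a)) ^ 2)) * 4) by (field; repeat split; lra).
    apply Rmult_le_compat_l.
    + apply Rle_mult_inv_pos; auto. apply Rmult_lt_0_compat; [|auto]. apply Rmult_lt_0_compat; lra.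
    + apply (Rmult_le_reg_r (INR K + 1)); [lra|]. unfold Rdiv. rewrite Rmult_assoc, Rinv_l by lra. lra.
Qed.

Lemma J_IInt x M : 0 < x -> (2 <= M)%nat ->
  IInt (Wf x M) (INR (fact M) * Series (sig x (S M))).
Proof.
  intros Hx HM.
  set (sg := fun k => (1 + INR k) * P (x + INR k) M 0).
  assert (Hsg : forall k, sg k = INR (fact M) * sig x (S M) k).
  { intros k. unfold sg, sig. assert (0 <= INR k) by apply pos_INR.
    rewrite P_at0 by lra. field. apply pow_nonzero. lra. }
  assert (Hex0 := ex_series_sig x (S M) Hx ltac:(lia)).
  assert (Hex : ex_series sg).
  { apply (ex_series_ext (fun k => scal (INR (fact M)) (sig x (S M) k))).
    - intros k. rewrite Hsg. reflexivity.
    - apply (ex_series_scal_l (K := R_AbsRing) (V := R_NormedModule)). exact Hex0. }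
  assert (HS : Series sg = INR (fact M) * Series (sig x (S M))).
  { rewrite <- Series_scal_l. apply Series_ext. exact Hsg. }
  rewrite <- HS. set (S0 := Series sg).
  assert (Hsgpos : forall k, 0 <= sg k).
  { intros k. unfold sg. assert (0 <= INR k) by apply pos_INR.
    apply Rmult_le_pos; [lra|]. apply P_nonneg; lra. }
  intros eps He.
  destruct (series_approx sg (eps/3) Hex ltac:(lra)) as [K HK].
  set (N := (INR K + 1) ^ 2).
  assert (HN : 1 <= N).
  { unfold N. assert (0 <= INR K) by apply pos_INR. nra. }
  assert (Heps : 0 < eps / (6 * N)) by (apply Rdiv_lt_0_compat; lra).
  destruct (P_lim_inf x M Hx (eps / (6 * N)) Heps) as [B0 [HB0 HB]].
  exists (Rmin 1 (eps / (6 * N))), (Rmax B0 2).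
  split; [apply Rmin_pos; lra|]. split.
  { apply Rle_lt_trans with 1; [apply Rmin_l|]. apply Rlt_le_trans with 2; [lra|apply Rmax_r]. }
  intros a b Ha Hb.
  assert (Ha1 : a <= 1) by (apply Rle_trans with (Rmin 1 (eps / (6 * N))); [lra|apply Rmin_l]).
  assert (Ha2 : a <= eps / (6 * N)) by (apply Rle_trans with (Rmin 1 (eps / (6 * N))); [lra|apply Rmin_r]).
  assert (Hb1 : B0 <= b) by (apply Rle_trans with (Rmax B0 2); [apply Rmax_l|lra]).
  assert (Hb2 : 2 <= b) by (apply Rle_trans with (Rmax B0 2); [apply Rmax_r|lra]).
  assert (Hab : a < b) by lra.
  assert (ExW : ex_RInt (Wf x M) a b).
  { apply (ex_RInt_continuous (V := R_CompleteNormedModule)). intros z Hz. rewrite Rmin_left, Rmax_right in Hz by lra.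
    apply Wf_cont. lra. }
  split; [exact ExW|].
  assert (Hlow : S0 - 2 * eps / 3 < RInt (Wf x M) a b).
  { assert (HP := PSf_RInt x M K a b Hx).
    assert (Hle : RInt (PSf x M K) a b <= RInt (Wf x M) a b).
    { apply RInt_le; auto; [lra | eexists; eauto |].
      intros t Ht. destruct (tail_bounds x M K t Hx ltac:(lra)). lra. }
    rewrite (is_RInt_unique _ _ _ _ HP) in Hle.
    assert (Hdiff : sum_f_R0 (fun k => sg k - (1 + INR k) * (P (x + INR k) M a - P (x + INR k) M b)) K
                    <= (eps / (6 * N) + eps / (6 * N)) * (INR K + 1) * (INR K + 1)).
    {
      apply sum_const_le. intros k Hk.
      assert (Hk0 : 0 <= INR k) by apply pos_INR.
      assert (HkK : INR k <= INR K) by (apply le_INR; auto).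
      unfold sg.
      assert (H1 := P_near0 (x + INR k) M a ltac:(lra) ltac:(lra)).
      assert (H2 := P_mono_c x (x + INR k) M b Hx ltac:(lra) ltac:(lra)).
      assert (H3 := HB b Hb1).
      replace ((1 + INR k) * P (x + INR k) M 0 - (1 + INR k) * (P (x + INR k) M a - P (x + INR k) M b))
        with ((1 + INR k) * ((P (x + INR k) M 0 - P (x + INR k) M a) + P (x + INR k) M b)) by ring.
      rewrite (Rmult_comm (eps / (6 * N) + eps / (6 * N))).
      apply Rmult_le_compat; try lra.
      apply Rplus_le_le_0_compat; [| apply P_nonneg; lra].
      assert (P (x + INR k) M a <= P (x + INR k) M 0) by (apply P_decr; lra). lra. }
    rewrite minus_sum in Hdiff.
    assert (HKN : (INR K + 1) * (INR K + 1) = N) by (unfold N; ring).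
    rewrite Rmult_assoc, HKN in Hdiff.
    replace ((eps / (6 * N) + eps / (6 * N)) * N) with (eps / 3) in Hdiff by (field; lra).
    fold S0 in HK. apply Rabs_def2 in HK. lra. }
  assert (Hup : RInt (Wf x M) a b <= S0).
  { apply Rnot_lt_le. intros Hlt.
    set (T := b ^ M * 4 / (a ^ 2 * (1 - exp (- a)) ^ 2)).
    destruct (exp_neg_pos a ltac:(lra)) as [Hq0 Hq1].
    assert (HT : 0 <= T).
    { unfold T. apply Rle_mult_inv_pos.
      - apply Rmult_le_pos; [apply pow_le; lra | lra].
      - apply Rmult_lt_0_compat; apply pow_lt; lra. }
    destruct (INR_unbounded ((b - a) * T / (RInt (Wf x M) a b - S0))) as [K' HK'].
    assert (HP := PSf_RInt x M K' a b Hx).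
    assert (ExP : ex_RInt (PSf x M K') a b) by (eexists; eauto).
    assert (Htail : RInt (fun t => Wf x M t - PSf x M K' t) a b <= (b - a) * (T / (INR K' + 1))).
    { assert (Hc : RInt (fun _ => T / (INR K' + 1)) a b = (b - a) * (T / (INR K' + 1)))
        by (rewrite RInt_const; reflexivity).
      rewrite <- Hc.
      apply RInt_le; [lra| | apply ex_RInt_const |].
      - apply (ex_RInt_minus (V := R_CompleteNormedModule)); auto.
      - intros t Ht. destruct (tail_bounds x M K' t Hx ltac:(lra)) as [_ H2].
        eapply Rle_trans; [exact H2|].
        eapply Rle_trans; [apply (tail_small a b M K'); lra|].
        right. unfold T. assert (0 <= INR K') by apply pos_INR. field.
        repeat split; try (apply pow_nonzero; lra); lra. }
    assert (Htail' : RInt (fun t => Wf x M t - PSf x M K' t) a b = RInt (Wf x M) a b - RInt (PSf x M K') a b).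
    { apply (RInt_minus (V := R_CompleteNormedModule)); auto. }
    rewrite Htail', (is_RInt_unique _ _ _ _ HP) in Htail.
    assert (Hsum : sum_f_R0 (fun k => (1 + INR k) * (P (x + INR k) M a - P (x + INR k) M b)) K'
                   <= sum_f_R0 sg K').
    { apply sum_Rle. intros k Hk. unfold sg. assert (0 <= INR k) by apply pos_INR.
      apply Rmult_le_compat_l; [lra|].
      assert (P (x + INR k) M a <= P (x + INR k) M 0) by (apply P_decr; lra).
      assert (0 <= P (x + INR k) M b) by (apply P_nonneg; lra). lra. }
    assert (Hpart := partial_le_series sg K' Hsgpos Hex). fold S0 in Hpart.
    assert (HK'0 : 0 < INR K' + 1) by (assert (0 <= INR K') by apply pos_INR; lra).
    assert (Hd : 0 < RInt (Wf x M) a b - S0) by lra.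
    assert (Hsmall : (b - a) * (T / (INR K' + 1)) < RInt (Wf x M) a b - S0).
    { apply (Rmult_lt_reg_r (INR K' + 1)); auto.
      replace ((b - a) * (T / (INR K' + 1)) * (INR K' + 1)) with ((b - a) * T) by (field; lra).
      apply (Rmult_lt_reg_r (/ (RInt (Wf x M) a b - S0))). apply Rinv_0_lt_compat; auto.
      replace ((RInt (Wf x M) a b - S0) * (INR K' + 1) * / (RInt (Wf x M) a b - S0)) with (INR K' + 1) by (field; lra).
      unfold Rdiv in HK'. lra. }
    lra. }
  apply Rabs_def1; lra.
Qed.

Definition psi (t : R) : R := 2 / t - 2 / (exp t - 1).

Lemma expm1_pos t : 0 < t -> 0 < exp t - 1.
Proof. intros Ht. assert (1 + t <= exp t) by apply exp_ineq1_le. lra. Qed.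

Lemma sinh_gt s : 0 < s -> 2 * s < exp s - exp (- s).
Proof.
  intros Hs.
  assert (H := exp_ge_taylor s 3 ltac:(lra)). simpl in H.
  set (A := 1 + s + s * s / 2 + s * s * s / 6).
  assert (HA : A <= exp s) by (unfold A; lra).
  set (B := 1 - s + s * s / 2).
  assert (HB : 0 < B) by (unfold B; nra).
  assert (HAB : 1 <= A * B).
  { replace (A * B) with (1 + s ^ 3 / 6 + s ^ 4 / 12 + s ^ 5 / 12) by (unfold A, B; field).
    assert (0 < s ^ 3) by (apply pow_lt; lra). assert (0 < s ^ 4) by (apply pow_lt; lra).
    assert (0 < s ^ 5) by (apply pow_lt; lra). lra. }
  assert (Hes : 0 < exp s) by apply exp_pos.
  assert (Hinv : exp (- s) <= B).
  { rewrite exp_Ropp. apply (Rmult_le_reg_l (exp s)); auto. rewrite Rinv_r by lra.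
    apply Rle_trans with (A * B); [auto| apply Rmult_le_compat_r; lra]. }
  unfold A, B in *. assert (0 < s * s * s) by (apply Rmult_lt_0_compat; nra). lra.
Qed.

Lemma psi_deriv_neg t : 0 < t -> 2 * exp t / (exp t - 1) ^ 2 < 2 / t ^ 2.
Proof.
  intros Ht.
  assert (He1 := expm1_pos t Ht).
  set (u := exp (t / 2)).
  assert (Hu : exp t = u * u) by (unfold u; rewrite <- exp_plus; f_equal; field).
  assert (Hu0 : 0 < u) by apply exp_pos.
  assert (Hs := sinh_gt (t / 2) ltac:(lra)). fold u in Hs.
  rewrite exp_Ropp in Hs. fold u in Hs.
  assert (Hk : t * u < u * u - 1).
  { apply (Rmult_lt_compat_r u) in Hs; [|auto].
    replace ((u - / u) * u) with (u * u - 1) in Hs by (field; lra). lra. }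
  rewrite Hu in *.
  assert (Hpos : 0 < t * u) by nra.
  assert (H2 : (t * u) ^ 2 < (u * u - 1) ^ 2) by (apply pow_lt_compat_l; [lra | lia] || nra).
  apply (Rmult_lt_reg_r ((u * u - 1) ^ 2 * t ^ 2)).
  { apply Rmult_lt_0_compat; apply pow_lt; lra. }
  replace (2 * (u * u) / (u * u - 1) ^ 2 * ((u * u - 1) ^ 2 * t ^ 2)) with (2 * (t * u) ^ 2) by (field; lra).
  replace (2 / t ^ 2 * ((u * u - 1) ^ 2 * t ^ 2)) with (2 * (u * u - 1) ^ 2) by (field; lra).
  lra.
Qed.

Lemma psi_decr s t : 0 < s -> s < t -> psi t < psi s.
Proof.
  intros Hs Hst.
  assert (H := incr_function (fun t => - psi t) (Finite 0) p_infty
                 (fun t => 2 / t ^ 2 - 2 * exp t / (exp t - 1) ^ 2)).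
  assert (- psi s < - psi t); [|lra].
  apply H; try (simpl; auto; fail).
  - intros z Hz _. simpl in Hz. unfold psi. assert (He1 := expm1_pos z Hz).
    auto_derive.
    + repeat split; lra.
    + Rfield. repeat split; try lra.
  - intros z Hz _. simpl in Hz. assert (H1 := psi_deriv_neg z Hz). cbv beta. lra.
Qed.

Definition ell (x t : R) : R := x + 2 / (exp t - 1).

Lemma ell_decr x s t : 0 < s -> s < t -> ell x t < ell x s.
Proof.
  intros Hs Hst. unfold ell.
  assert (H1 := expm1_pos s Hs).
  assert (exp s < exp t) by (apply exp_increasing; lra).
  assert (2 / (exp t - 1) < 2 / (exp s - 1)); [|lra].
  unfold Rdiv. apply Rmult_lt_compat_l; [lra|]. apply Rinv_lt_contravar; [nra|lra].
Qed.

Lemma ell_psi x t : 0 < t -> ell x t = x + 2 / t - psi t.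
Proof. intros Ht. unfold ell, psi. ring. Qed.

Lemma psi_cont t : 0 < t -> continuous psi t.
Proof.
  intros Ht. apply (@ex_derive_continuous R_AbsRing R_NormedModule).
  unfold psi. assert (He1 := expm1_pos t Ht). auto_derive. repeat split; lra.
Qed.

Lemma ell_cont x t : 0 < t -> continuous (ell x) t.
Proof.
  intros Ht. apply (@ex_derive_continuous R_AbsRing R_NormedModule).
  unfold ell. assert (He1 := expm1_pos t Ht). auto_derive. lra.
Qed.

Lemma Wf_deriv x m t : 0 < t ->
  is_derive (Wf x (S m)) t ((INR (S m) - 2) * Wf x m t - x * Wf x (S m) t + psi t * Wf x (S m) t).
Proof.
  intros Ht. unfold Wf, Lf, psi.
  assert (He1 := expm1_pos t Ht). destruct (exp_neg_pos t Ht) as [Hq0 Hq1].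
  assert (Het : 0 < exp t) by apply exp_pos.
  auto_derive.
  - apply Rgt_not_eq. assert (0 < 1 + - exp (- t)) by lra. nra.
  - change (match m with 0%nat => 1 | S _ => INR m + 1 end) with (INR (S m)).
    replace (exp t) with (/ exp (- t)) by (rewrite exp_Ropp, Rinv_inv; reflexivity).
    set (q := exp (- t)) in *. set (ex := exp (- (x * t))).
    assert (Hq : / q - 1 <> 0).
    { assert (1 < / q). { rewrite <- Rinv_1. apply Rinv_lt_contravar; lra. } lra. }
    simpl pow. Rfield. repeat split; try lra.
Qed.

Lemma one_minus_exp_lb a : 0 < a -> a * exp (- a) <= 1 - exp (- a).
Proof.
  intros Ha. assert (H := exp_ineq1_le a).
  assert (He : exp (- a) * exp a = 1) by (rewrite <- exp_plus; replace (-a + a) with 0 by ring; apply exp_0).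
  assert (0 < exp (- a)) by apply exp_pos. nra.
Qed.

Lemma Wf_nonneg x M t : 0 < t -> 0 <= Wf x M t.
Proof.
  intros Ht. unfold Wf, Lf. destruct (exp_neg_pos t Ht).
  apply Rmult_le_pos; [apply pow_le; lra|]. apply Rle_mult_inv_pos; [apply Rlt_le, exp_pos|].
  apply pow_lt. lra.
Qed.

Lemma Wf_pos x M t : 0 < t -> 0 < Wf x M t.
Proof.
  intros Ht. unfold Wf, Lf. destruct (exp_neg_pos t Ht).
  apply Rmult_lt_0_compat; [apply pow_lt; lra|]. apply Rdiv_lt_0_compat; [apply exp_pos|].
  apply pow_lt. lra.
Qed.

Lemma Wf_small x M a : 0 < x -> (3 <= M)%nat -> 0 < a <= 1 -> Wf x M a <= 9 * a.
Proof.
  intros Hx HM Ha. unfold Wf, Lf.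
  assert (H1 := one_minus_exp_lb a ltac:(lra)).
  destruct (exp_neg_pos a ltac:(lra)) as [Hq0 Hq1].
  assert (Hxa : exp (- (x * a)) <= 1).
  { rewrite <- exp_0. left. apply exp_increasing. assert (0 < x * a) by (apply Rmult_lt_0_compat; lra). lra. }
  assert (He : exp (- a) * exp a = 1) by (rewrite <- exp_plus; replace (-a + a) with 0 by ring; apply exp_0).
  assert (Hea : exp a <= 3).
  { apply Rle_trans with (exp 1); [|apply exp_le_3]. destruct (Req_dec a 1) as [->|]; [lra|]. left; apply exp_increasing; lra. }
  destruct M as [|[|[|M]]]; [lia|lia|lia|].
  (* a^(M+2) * e / (1-q)^2 <= a^(M+2)/(a^2 q^2) = a^M (e^a)^2 <= 9 a *)
  assert (Hd : (a * exp (- a)) ^ 2 <= (1 - exp (- a)) ^ 2).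
  { apply pow_incr. split; [apply Rmult_le_pos; lra | auto]. }
  assert (Hpa : 0 < (a * exp (- a)) ^ 2) by (apply pow_lt; apply Rmult_lt_0_compat; lra).
  assert (HaM : a ^ M <= 1) by (rewrite <- (pow1 M); apply pow_incr; lra).
  assert (HaM0 : 0 <= a ^ M) by (apply pow_le; lra).
  apply Rle_trans with (a ^ S (S (S M)) * (1 / (a * exp (- a)) ^ 2)).
  - apply Rmult_le_compat_l; [apply pow_le; lra|]. unfold Rdiv.
    apply Rmult_le_compat; [apply Rlt_le, exp_pos| left; apply Rinv_0_lt_compat; apply pow_lt; lra | lra |].
    apply Rinv_le_contravar; auto.
  - replace (a ^ S (S (S M)) * (1 / (a * exp (- a)) ^ 2)) with (a * a ^ M * (exp a * exp a)).
    + assert (0 < exp a) by apply exp_pos.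
      assert (exp a * exp a <= 9) by nra.
      assert (0 <= a * a ^ M) by (apply Rmult_le_pos; lra).
      nra.
    + rewrite <- (Rinv_inv (exp a)), <- exp_Ropp. simpl. field. split; lra.
Qed.

Lemma Wf_lim0 x M : 0 < x -> (3 <= M)%nat ->
  forall eps, 0 < eps -> exists d, 0 < d /\ forall a, 0 < a <= d -> Rabs (Wf x M a - 0) < eps.
Proof.
  intros Hx HM eps He. exists (Rmin 1 (eps / 18)). split; [apply Rmin_pos; lra|].
  intros a Ha. assert (Ha1 : a <= 1) by (apply Rle_trans with (Rmin 1 (eps/18)); [lra|apply Rmin_l]).
  assert (Ha2 : a <= eps/18) by (apply Rle_trans with (Rmin 1 (eps/18)); [lra|apply Rmin_r]).
  assert (H1 := Wf_small x M a Hx HM ltac:(lra)). assert (H2 := Wf_nonneg x M a ltac:(lra)).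
  rewrite Rminus_0_r, Rabs_right by lra. lra.
Qed.

Lemma Wf_liminf x M : 0 < x ->
  forall eps, 0 < eps -> exists B, forall b, B <= b -> Rabs (Wf x M b - 0) < eps.
Proof.
  intros Hx eps He.
  set (C := 4 * INR (fact (S M)) / x ^ (S M)).
  assert (HC : 0 < C) by (unfold C; apply Rdiv_lt_0_compat; [assert (0 < INR (fact (S M))) by apply INR_fact_lt_0; lra| apply pow_lt; lra]).
  exists (Rmax 1 (2 * C / eps)). intros b Hb.
  assert (Hb1 : 1 <= b) by (apply Rle_trans with (Rmax 1 (2 * C / eps)); [apply Rmax_l|lra]).
  assert (Hb2 : 2 * C / eps <= b) by (apply Rle_trans with (Rmax 1 (2 * C / eps)); [apply Rmax_r|lra]).
  assert (H2 := Wf_nonneg x M b ltac:(lra)).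
  rewrite Rminus_0_r, Rabs_right by lra.
  assert (Hq : exp (- b) <= / 2).
  { assert (H := exp_ineq1_le b). rewrite exp_Ropp. apply Rinv_le_contravar; lra. }
  assert (Hq0 : 0 < exp (- b)) by apply exp_pos.
  assert (Hd : / 4 <= (1 - exp (- b)) ^ 2) by (simpl; nra).
  assert (Hp := pow_exp_bound x M b Hx ltac:(lra)).
  unfold Wf, Lf.
  apply Rle_lt_trans with (4 * (b ^ M * exp (- (x * b)))).
  - unfold Rdiv. rewrite <- Rmult_assoc. rewrite (Rmult_comm 4). apply Rmult_le_compat_l.
    + apply Rmult_le_pos; [apply pow_le; lra | apply Rlt_le, exp_pos].
    + replace 4 with (/ / 4) by (field). apply Rinv_le_contravar; [lra | auto].
  - apply Rle_lt_trans with (4 * (INR (fact (S M)) / (x ^ S M * b))); [lra|].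
    replace (4 * (INR (fact (S M)) / (x ^ S M * b))) with (C / b) by (unfold C; field; split; [lra| apply pow_nonzero; lra]).
    apply (Rmult_lt_reg_r b); [lra|]. unfold Rdiv at 1. rewrite Rmult_assoc, Rinv_l, Rmult_1_r by lra.
    assert (2 * C <= eps * b).
    { apply (Rmult_le_reg_r (/ eps)); [apply Rinv_0_lt_compat; lra|].
      replace (eps * b * / eps) with b by (field; lra). unfold Rdiv in Hb2. lra. }
    nra.
Qed.

Lemma IInt_psiW x m Jm JSm : 0 < x -> (2 <= m)%nat -> IInt (Wf x m) Jm -> IInt (Wf x (S m)) JSm ->
  IInt (fun t => psi t * Wf x (S m) t) (x * JSm - (INR (S m) - 2) * Jm).
Proof.
  intros Hx Hm H1 H2.
  set (g := fun t => (INR (S m) - 2) * Wf x m t - x * Wf x (S m) t + psi t * Wf x (S m) t).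
  assert (Hg : IInt g (0 - 0)).
  { apply (IInt_deriv (Wf x (S m)) g).
    - intros t Ht. apply Wf_deriv; auto.
    - intros t Ht. apply (@ex_derive_continuous R_AbsRing R_NormedModule).
      unfold g, Wf, Lf, psi. assert (He1 := expm1_pos t Ht). destruct (exp_neg_pos t Ht).
      auto_derive. repeat split; try lra; apply Rgt_not_eq; assert (0 < 1 + - exp (- t)) by lra; nra.
    - apply Wf_lim0; auto; lia.
    - apply Wf_liminf; auto. }
  assert (H3 := IInt_plus _ _ _ _ Hg (IInt_scal _ _ (- (INR (S m) - 2)) H1)).
  assert (H4 := IInt_plus _ _ _ _ H3 (IInt_scal _ _ x H2)).
  replace (x * JSm - (INR (S m) - 2) * Jm) with (0 - 0 + - (INR (S m) - 2) * Jm + x * JSm) by ring.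
  eapply IInt_ext; [|exact H4]. intros t Ht. cbv beta. unfold g. ring.
Qed.

Lemma cheb (w g : R -> R) (A0 A1 B0 B1 : R) :
  (forall t, 0 < t -> 0 < w t) -> (forall t, 0 < t -> continuous w t) ->
  (forall t, 0 < t -> continuous g t) -> (forall s t, 0 < s -> s < t -> g t < g s) ->
  IInt w A0 -> IInt (fun t => t * w t) A1 -> IInt (fun t => g t * w t) B0 ->
  IInt (fun t => t * (g t * w t)) B1 ->
  A0 * B1 < A1 * B0.
Proof.
  intros Hw Hwc Hgc Hg I0 I1 J0 J1.
  assert (Hpos : forall f I, (forall t, 0 < t -> 0 < f t) -> (forall t, 0 < t -> continuous f t) -> IInt f I -> 0 < I).
  { intros f I Hf Hfc HI.
    assert (Hex : ex_RInt f 1 2).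
    { apply (ex_RInt_continuous (V := R_CompleteNormedModule)). intros z Hz.
      rewrite Rmin_left, Rmax_right in Hz by lra. apply Hfc. lra. }
    assert (H1 := IInt_ge_RInt f I 1 2 ltac:(intros t Ht; left; apply Hf; auto) HI ltac:(lra) Hex).
    assert (H2 : RInt (fun _ => 0) 1 2 < RInt f 1 2).
    { apply RInt_lt; [lra | | |].
      - intros z Hz. apply Hfc. lra.
      - intros z Hz. apply continuous_const.
      - intros z Hz. apply Hf. lra. }
    rewrite RInt_const in H2. unfold scal in H2; simpl in H2; unfold mult in H2; simpl in H2. lra. }
  assert (HA0 : 0 < A0) by (apply (Hpos w); auto).
  assert (HA1 : 0 < A1).
  { apply (Hpos (fun t => t * w t)); auto.
    - intros t Ht. apply Rmult_lt_0_compat; auto.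
    - intros t Ht. apply (continuous_mult (K := R_AbsRing) (fun t => t) w); [apply continuous_id | auto]. }
  set (m0 := A1 / A0).
  assert (Hm0 : 0 < m0) by (unfold m0; apply Rdiv_lt_0_compat; auto).
  set (gm := g m0).
  set (h := fun t => w t * (t - m0) * (gm - g t)).
  assert (Hh : IInt h (- B1 + m0 * B0 + gm * A1 - m0 * gm * A0)).
  { assert (K1 := IInt_scal _ _ (-1) J1).
    assert (K2 := IInt_scal _ _ m0 J0).
    assert (K3 := IInt_scal _ _ gm I1).
    assert (K4 := IInt_scal _ _ (- (m0 * gm)) I0).
    assert (K := IInt_plus _ _ _ _ (IInt_plus _ _ _ _ (IInt_plus _ _ _ _ K1 K2) K3) K4).
    replace (- B1 + m0 * B0 + gm * A1 - m0 * gm * A0) with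
      (-1 * B1 + m0 * B0 + gm * A1 + - (m0 * gm) * A0) by ring.
    eapply IInt_ext; [|exact K]. intros t Ht. cbv beta. unfold h. ring. }
  assert (Hhnn : forall t, 0 < t -> 0 <= h t).
  { intros t Ht. unfold h. assert (Hwt := Hw t Ht).
    destruct (Rtotal_order t m0) as [Hlt|[Heq|Hgt]].
    - assert (g m0 < g t) by (apply Hg; auto). unfold gm.
      replace (w t * (t - m0) * (g m0 - g t)) with (w t * ((m0 - t) * (g t - g m0))) by ring.
      apply Rmult_le_pos; [lra|]. apply Rmult_le_pos; lra.
    - subst. unfold gm. rewrite Rminus_diag. lra.
    - assert (g t < g m0) by (apply Hg; auto). unfold gm.
      apply Rmult_le_pos; [apply Rmult_le_pos|]; lra. }
  assert (Hhc : forall t, 0 < t -> continuous h t).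
  { intros t Ht.
    apply (continuous_ext (fun t => mult (mult (w t) (minus t m0)) (minus gm (g t)))).
    { intros z. unfold h, mult, minus, plus, opp; simpl. reflexivity. }
    apply (continuous_mult (K := R_AbsRing) (fun t => mult (w t) (minus t m0)) (fun t => minus gm (g t))).
    - apply (continuous_mult (K := R_AbsRing) w (fun t => minus t m0)).
      + apply Hwc; auto.
      + apply (continuous_minus (K := R_AbsRing) (V := R_NormedModule) (fun t => t) (fun _ => m0));
          [apply continuous_id | apply continuous_const].
    - apply (continuous_minus (K := R_AbsRing) (V := R_NormedModule) (fun _ => gm) g);
        [apply continuous_const | apply Hgc; auto]. }
  assert (Hex : ex_RInt h (m0 + 1) (m0 + 2)).
  { apply (ex_RInt_continuous (V := R_CompleteNormedModule)). intros z Hz.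
    rewrite Rmin_left, Rmax_right in Hz by lra. apply Hhc. lra. }
  assert (Hge := IInt_ge_RInt h _ (m0 + 1) (m0 + 2) Hhnn Hh ltac:(lra) Hex).
  assert (Hlt : RInt (fun _ => 0) (m0 + 1) (m0 + 2) < RInt h (m0 + 1) (m0 + 2)).
  { apply RInt_lt; [lra | | |].
    - intros z Hz. apply Hhc. lra.
    - intros z Hz. apply continuous_const.
    - intros z Hz. unfold h. assert (Hwz := Hw z ltac:(lra)).
      assert (g z < g m0) by (apply Hg; lra). unfold gm.
      apply Rmult_lt_0_compat; [apply Rmult_lt_0_compat|]; lra. }
  rewrite RInt_const in Hlt. unfold scal in Hlt; simpl in Hlt; unfold mult in Hlt; simpl in Hlt.
  assert (HmA : m0 * A0 = A1) by (unfold m0; field; lra).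
  assert (Hkey : 0 < - B1 + m0 * B0) by nra.
  apply (Rmult_lt_compat_l A0) in Hkey; auto.
  replace (A0 * (- B1 + m0 * B0)) with (- (A0 * B1) + (m0 * A0) * B0) in Hkey by ring.
  rewrite HmA in Hkey. lra.
Qed.

Definition Jv (x : R) (M : nat) : R := INR (fact M) * Series (sig x (S M)).

Lemma main_ineq x m : 0 < x -> (2 <= m)%nat ->
  (INR (S m) - 2) * Jv x m * Jv x (S (S m)) < (INR (S m) - 1) * Jv x (S m) ^ 2 /\
  (INR (S m) + 1) * Jv x (S m) ^ 2 < INR (S m) * Jv x m * Jv x (S (S m)).
Proof.
  intros Hx Hm.
  assert (I0 : IInt (Wf x m) (Jv x m)) by (apply J_IInt; auto).
  assert (I1 : IInt (Wf x (S m)) (Jv x (S m))) by (apply J_IInt; auto).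
  assert (I2 : IInt (Wf x (S (S m))) (Jv x (S (S m)))) by (apply J_IInt; auto).
  set (J0 := Jv x m) in *. set (J1 := Jv x (S m)) in *. set (J2 := Jv x (S (S m))) in *.
  set (w := Wf x (S m)).
  assert (Iw : IInt w J1) by exact I1.
  assert (Itw : IInt (fun t => t * w t) J2).
  { eapply IInt_ext; [|exact I2]. intros t Ht. unfold w, Wf. simpl. ring. }
  assert (P0 := IInt_psiW x m J0 J1 Hx Hm I0 I1).
  assert (P1 := IInt_psiW x (S m) J1 J2 Hx ltac:(lia) I1 I2).
  assert (Ipw : IInt (fun t => psi t * w t) (x * J1 - (INR (S m) - 2) * J0)) by exact P0.
  assert (Itpw : IInt (fun t => t * (psi t * w t)) (x * J2 - (INR (S (S m)) - 2) * J1)).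
  { eapply IInt_ext; [|exact P1]. intros t Ht. unfold w, Wf. simpl. ring. }
  assert (Hwpos : forall t, 0 < t -> 0 < w t) by (intros; apply Wf_pos; auto).
  assert (Hwc : forall t, 0 < t -> continuous w t) by (intros; apply Wf_cont; auto).
  assert (C1 := cheb w psi J1 J2 _ _ Hwpos Hwc psi_cont psi_decr Iw Itw Ipw Itpw).
  assert (Iew : IInt (fun t => ell x t * w t) (x * J1 + 2 * J0 + -1 * (x * J1 - (INR (S m) - 2) * J0))).
  { assert (K := IInt_plus _ _ _ _ (IInt_plus _ _ _ _ (IInt_scal _ _ x Iw) (IInt_scal _ _ 2 I0))
                    (IInt_scal _ _ (-1) Ipw)).
    eapply IInt_ext; [|exact K]. intros t Ht. cbv beta. rewrite ell_psi by auto.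
    unfold w, Wf. simpl. field. lra. }
  assert (Itew : IInt (fun t => t * (ell x t * w t)) (x * J2 + 2 * J1 + -1 * (x * J2 - (INR (S (S m)) - 2) * J1))).
  { assert (K := IInt_plus _ _ _ _ (IInt_plus _ _ _ _ (IInt_scal _ _ x Itw) (IInt_scal _ _ 2 Iw))
                    (IInt_scal _ _ (-1) Itpw)).
    eapply IInt_ext; [|exact K]. intros t Ht. cbv beta. rewrite ell_psi by auto.
    unfold w, Wf. simpl. field. lra. }
  assert (C2 := cheb w (ell x) J1 J2 _ _ Hwpos Hwc (ell_cont x) (ell_decr x) Iw Itw Iew Itew).
  rewrite S_INR in *. rewrite S_INR in C1, C2.
  split; nra.
Qed.

Lemma IInt_E c M : 0 < c -> IInt (E c M) (P c M 0).
Proof.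
  intros Hc. replace (P c M 0) with (0 - - P c M 0) by ring.
  apply (IInt_deriv (fun t => - P c M t) (E c M)).
  - intros t Ht. assert (H1 := is_derive_opp (P c M) t (-E c M t) (P_deriv c M t ltac:(lra))).
    replace (E c M t) with (opp (- E c M t)) by (unfold opp; simpl; ring). exact H1.
  - intros t Ht. apply E_cont.
  - intros eps He. exists (Rmin 1 (eps / 2)). split; [apply Rmin_pos; lra|].
    intros a Ha. assert (Ha1 : a <= 1) by (apply Rle_trans with (Rmin 1 (eps/2)); [lra|apply Rmin_l]).
    assert (Ha2 : a <= eps/2) by (apply Rle_trans with (Rmin 1 (eps/2)); [lra|apply Rmin_r]).
    assert (H1 := P_near0 c M a Hc ltac:(lra)).
    assert (H2 := P_decr c M 0 a Hc ltac:(lra)).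
    rewrite Rabs_right by lra. lra.
  - intros eps He. destruct (P_lim_inf c M Hc eps He) as [B [HB H]].
    exists B. intros b Hb. assert (H1 := H b Hb). assert (H2 := P_nonneg c M b Hc ltac:(lra)).
    rewrite Rabs_left1 by lra. lra.
Qed.

Lemma E_le_Wf x k t : 0 < x -> 0 < t -> E x k t <= Wf x (S (S k)) t.
Proof.
  intros Hx Ht. unfold E, Wf, Lf. destruct (exp_neg_pos t Ht) as [Hq0 Hq1].
  assert (H := exp_ineq1_le (- t)).
  assert (Hd : 0 < (1 - exp (- t)) ^ 2) by (apply pow_lt; lra).
  assert (Hd2 : (1 - exp (- t)) ^ 2 <= t ^ 2) by (apply pow_incr; lra).
  assert (Hk : 0 < t ^ k) by (apply pow_lt; lra).
  assert (He : 0 < exp (- (x * t))) by apply exp_pos.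
  replace (t ^ S (S k) * (exp (- (x * t)) / (1 - exp (- t)) ^ 2))
    with (t ^ k * exp (- (x * t)) * (t ^ 2 / (1 - exp (- t)) ^ 2)) by (simpl; field; lra).
  rewrite <- (Rmult_1_r (t ^ k * exp (- (x * t)))) at 1.
  apply Rmult_le_compat_l; [nra|].
  apply (Rmult_le_reg_r ((1 - exp (- t)) ^ 2)); auto.
  unfold Rdiv. rewrite Rmult_assoc, Rinv_l, Rmult_1_r by lra. lra.
Qed.

Lemma Wf_le_E x k t : 0 < x -> 0 < t ->
  Wf x (S (S k)) t <= E x k t + 2 * E x (S k) t + E x (S (S k)) t.
Proof.
  intros Hx Ht. unfold E, Wf, Lf. destruct (exp_neg_pos t Ht) as [Hq0 Hq1].
  assert (H := exp_ineq1_le t).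
  assert (Hq : (1 + t) * exp (- t) <= 1).
  { rewrite exp_Ropp. apply (Rmult_le_reg_r (exp t)); [apply exp_pos|].
    rewrite Rmult_assoc, Rinv_l by (apply Rgt_not_eq, exp_pos). lra. }
  assert (Hd : 0 < 1 - exp (- t)) by lra.
  assert (Hr : t <= (1 + t) * (1 - exp (- t))) by nra.
  assert (Hr2 : t ^ 2 <= ((1 + t) * (1 - exp (- t))) ^ 2) by (apply pow_incr; lra).
  assert (Hk : 0 < t ^ k) by (apply pow_lt; lra).
  assert (He : 0 < exp (- (x * t))) by apply exp_pos.
  replace (t ^ S (S k) * (exp (- (x * t)) / (1 - exp (- t)) ^ 2))
    with (t ^ k * exp (- (x * t)) * (t ^ 2 / (1 - exp (- t)) ^ 2)) by (simpl; field; lra).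
  replace (t ^ k * exp (- (x * t)) + 2 * (t ^ S k * exp (- (x * t))) + t ^ S (S k) * exp (- (x * t)))
    with (t ^ k * exp (- (x * t)) * (1 + t) ^ 2) by (simpl; ring).
  apply Rmult_le_compat_l; [nra|].
  apply (Rmult_le_reg_r ((1 - exp (- t)) ^ 2)); [apply pow_lt; lra|].
  unfold Rdiv. rewrite Rmult_assoc, Rinv_l, Rmult_1_r by (apply pow_nonzero; lra).
  rewrite <- Rpow_mult_distr. lra.
Qed.

Lemma Jv_lower x k : 0 < x -> INR (fact k) / x ^ (S k) <= Jv x (S (S k)).
Proof.
  intros Hx. rewrite <- P_at0 by lra.
  apply (IInt_le (E x k) (Wf x (S (S k)))).
  - intros t Ht. apply E_le_Wf; auto.
  - apply IInt_E; auto.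
  - apply J_IInt; auto. lia.
Qed.

Lemma Jv_upper x k : 0 < x ->
  Jv x (S (S k)) <= INR (fact k) / x ^ (S k) + 2 * (INR (fact (S k)) / x ^ (S (S k)))
                    + INR (fact (S (S k))) / x ^ (S (S (S k))).
Proof.
  intros Hx. rewrite <- !P_at0 by lra.
  apply (IInt_le (Wf x (S (S k))) (fun t => E x k t + 2 * E x (S k) t + E x (S (S k)) t)).
  - intros t Ht. apply Wf_le_E; auto.
  - apply J_IInt; auto. lia.
  - apply IInt_plus; [apply IInt_plus|]; [apply IInt_E; auto | apply IInt_scal, IInt_E; auto | apply IInt_E; auto].
Qed.

Lemma Jv_pos x k : 0 < x -> 0 < Jv x (S (S k)).
Proof.
  intros Hx. eapply Rlt_le_trans; [|apply Jv_lower; auto].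
  apply Rdiv_lt_0_compat; [apply INR_fact_lt_0 | apply pow_lt; auto].
Qed.

Lemma S_bounds x m : 0 < x <= 1 -> (3 <= m)%nat ->
  / x ^ m <= Series (sig x m) <= / x ^ m + 2 * Series (sig 1 m).
Proof.
  intros Hx Hm.
  assert (Hex := ex_series_sig x m ltac:(lra) Hm).
  assert (Hex1 := ex_series_sig 1 m ltac:(lra) Hm).
  rewrite (Series_incr_1 _ Hex).
  assert (H0 : sig x m 0 = / x ^ m) by (unfold sig; simpl INR; rewrite !Rplus_0_r; field; apply pow_nonzero; lra).
  rewrite H0.
  assert (Hb : forall k, 0 <= sig x m (S k) <= 2 * sig 1 m k).
  { intros k. unfold sig. rewrite S_INR. assert (Hk : 0 <= INR k) by apply pos_INR.
    assert (Hp1 : 0 < (1 + INR k) ^ m) by (apply pow_lt; lra).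
    assert (Hp2 : 0 < (x + (INR k + 1)) ^ m) by (apply pow_lt; lra).
    split; [apply Rle_mult_inv_pos; lra|].
    assert (Hle : (1 + INR k) ^ m <= (x + (INR k + 1)) ^ m) by (apply pow_incr; lra).
    apply Rle_trans with ((1 + (INR k + 1)) / (1 + INR k) ^ m).
    - unfold Rdiv. apply Rmult_le_compat_l; [lra|]. apply Rinv_le_contravar; auto.
    - unfold Rdiv. replace (2 * ((1 + INR k) * / (1 + INR k) ^ m)) with ((2 + 2 * INR k) * / (1 + INR k) ^ m) by ring.
      apply Rmult_le_compat_r; [left; apply Rinv_0_lt_compat; auto| lra]. }
  split.
  - assert (0 <= Series (fun k => sig x m (S k))); [|lra].
    assert (Hp := partial_le_series (fun k => sig x m (S k)) 0 ltac:(intros k; apply Hb)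
                    ltac:(apply (ex_series_incr_1 (sig x m)); exact Hex)).
    simpl sum_f_R0 in Hp. assert (H1 := Hb 0%nat). lra.
  - assert (Series (fun k => sig x m (S k)) <= 2 * Series (sig 1 m)); [|lra].
    rewrite <- Series_scal_l. apply Series_le; [apply Hb|].
    apply (ex_series_scal_l (K := R_AbsRing) (V := R_NormedModule)). exact Hex1.
Qed.

Lemma psi2_Jv n x : psi2 n x = (-1) ^ (n + 1) * Jv x n.
Proof. unfold psi2, Jv, sig. rewrite Nat.add_1_r. ring. Qed.

Lemma ratio_eq p x : 0 < x ->
  psi2_ratio (S (S (S p))) x = Jv x (S (S (S p))) ^ 2 / (Jv x (S (S p)) * Jv x (S (S (S (S p))))).
Proof.
  intros Hx. unfold psi2_ratio. rewrite !psi2_Jv.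
  replace (S (S (S p)) - 1)%nat with (S (S p)) by lia.
  rewrite !Nat.add_1_r.
  assert (H0 := Jv_pos x p Hx). assert (H1 := Jv_pos x (S p) Hx). assert (H2 := Jv_pos x (S (S p)) Hx).
  assert (Hu : (-1) ^ p <> 0) by (apply pow_nonzero; lra).
  simpl pow. field. repeat split; lra.
Qed.

Lemma div_lt_div a b c d : 0 < b -> 0 < d -> a * d < c * b -> a / b < c / d.
Proof.
  intros Hb Hd H. apply (Rmult_lt_reg_r (b * d)); [nra|].
  replace (a / b * (b * d)) with (a * d) by (field; lra).
  replace (c / d * (b * d)) with (c * b) by (field; lra). lra.
Qed.

Lemma part1 p x : 0 < x ->
  (INR (S (S (S p))) - 2) / (INR (S (S (S p))) - 1) < psi2_ratio (S (S (S p))) x /\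
  psi2_ratio (S (S (S p))) x < INR (S (S (S p))) / (INR (S (S (S p))) + 1).
Proof.
  intros Hx. rewrite ratio_eq by auto.
  destruct (main_ineq x (S (S p)) Hx ltac:(lia)) as [L U].
  assert (H0 := Jv_pos x p Hx). assert (H1 := Jv_pos x (S p) Hx). assert (H2 := Jv_pos x (S (S p)) Hx).
  set (J0 := Jv x (S (S p))) in *. set (J1 := Jv x (S (S (S p)))) in *.
  set (J2 := Jv x (S (S (S (S p))))) in *.
  assert (Hn : 3 <= INR (S (S (S p)))) by (rewrite !S_INR; assert (0 <= INR p) by apply pos_INR; lra).
  split; apply div_lt_div; try nra.
Qed.

Lemma part2 p c : (INR (S (S (S p))) - 2) / (INR (S (S (S p))) - 1) < c ->
  exists x, 0 < x /\ psi2_ratio (S (S (S p))) x < c.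
Proof.
  intros Hc.
  rewrite !S_INR in Hc. set (q := INR p) in *.
  assert (Hq : 0 <= q) by apply pos_INR.
  set (a0 := (q + 1) / (q + 2)).
  assert (Ha0 : 0 < a0) by (unfold a0; apply Rdiv_lt_0_compat; lra).
  replace (q + 1 + 1 + 1 - 2) with (q + 1) in Hc by ring.
  replace (q + 1 + 1 + 1 - 1) with (q + 2) in Hc by ring. fold a0 in Hc.
  set (rho := c / a0).
  assert (Hrho : 1 < rho).
  { unfold rho. apply (Rmult_lt_reg_r a0); auto. unfold Rdiv. rewrite Rmult_assoc, Rinv_l by lra. lra. }
  set (K := 2 * (q + 2) + (q + 3) * (q + 2)).
  assert (HK : 0 < K) by (unfold K; nra).
  set (delta := Rmin 1 ((rho - 1) / 4)).
  assert (Hd : 0 < delta) by (apply Rmin_pos; lra).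
  assert (Hd1 : delta <= 1) by apply Rmin_l.
  assert (Hd2 : delta <= (rho - 1) / 4) by apply Rmin_r.
  set (x := Rmax 1 (K / delta) + 1).
  assert (Hx1 : 2 <= x) by (unfold x; assert (1 <= Rmax 1 (K / delta)) by apply Rmax_l; lra).
  assert (HxK : K / delta < x) by (unfold x; assert (K / delta <= Rmax 1 (K / delta)) by apply Rmax_r; lra).
  assert (Hx : 0 < x) by lra.
  exists x. split; auto.
  rewrite ratio_eq by auto.
  assert (H0 := Jv_pos x p Hx). assert (H1 := Jv_pos x (S p) Hx). assert (H2 := Jv_pos x (S (S p)) Hx).
  assert (U := Jv_upper x (S p) Hx). assert (L0 := Jv_lower x p Hx). assert (L2 := Jv_lower x (S (S p)) Hx).
  set (J0 := Jv x (S (S p))) in *. set (J1 := Jv x (S (S (S p)))) in *.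
  set (J2 := Jv x (S (S (S (S p))))) in *.
  set (Uv := INR (fact (S p)) / x ^ S (S p) + 2 * (INR (fact (S (S p))) / x ^ S (S (S p))) +
             INR (fact (S (S (S p)))) / x ^ S (S (S (S p))) ) in *.
  set (L0v := INR (fact p) / x ^ S p) in *.
  set (L2v := INR (fact (S (S p))) / x ^ S (S (S p))) in *.
  assert (HL0 : 0 < L0v) by (unfold L0v; apply Rdiv_lt_0_compat; [apply INR_fact_lt_0 | apply pow_lt; lra]).
  assert (HL2 : 0 < L2v) by (unfold L2v; apply Rdiv_lt_0_compat; [apply INR_fact_lt_0 | apply pow_lt; lra]).
  set (eps := 2 * (q + 2) / x + (q + 3) * (q + 2) / x ^ 2).
  assert (Hid : Uv ^ 2 / (L0v * L2v) = a0 * (1 + eps) ^ 2).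
  { unfold Uv, L0v, L2v, eps, a0. rewrite !fact_simpl, !mult_INR, !S_INR. fold q.
    assert (HF : INR (fact p) <> 0) by (apply Rgt_not_eq, INR_fact_lt_0).
    assert (Hxp : x ^ p <> 0) by (apply pow_nonzero; lra).
    simpl pow. field. repeat split; lra. }
  assert (Hle : J1 ^ 2 / (J0 * J2) <= Uv ^ 2 / (L0v * L2v)).
  { unfold Rdiv. apply Rmult_le_compat.
    - apply pow_le; lra.
    - left. apply Rinv_0_lt_compat. nra.
    - apply pow_incr. lra.
    - apply Rinv_le_contravar; [nra|]. apply Rmult_le_compat; lra. }
  assert (Heps0 : 0 <= eps).
  { unfold eps. apply Rplus_le_le_0_compat; apply Rle_mult_inv_pos; try nra; apply pow_lt; lra. }
  assert (Heps : eps < delta).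
  { assert (Hx2 : / x ^ 2 <= / x).
    { apply Rinv_le_contravar; [lra|]. simpl. nra. }
    apply Rle_lt_trans with (K / x).
    - unfold eps, K, Rdiv. assert (0 <= (q + 3) * (q + 2)) by nra.
      assert ((q + 3) * (q + 2) * / x ^ 2 <= (q + 3) * (q + 2) * / x) by (apply Rmult_le_compat_l; auto).
      lra.
    - apply (Rmult_lt_reg_r x); [lra|]. unfold Rdiv. rewrite Rmult_assoc, Rinv_l, Rmult_1_r by lra.
      apply (Rmult_lt_reg_l (/ delta)); [apply Rinv_0_lt_compat; lra|].
      replace (/ delta * (delta * x)) with x by (field; lra).
      unfold Rdiv in HxK. lra. }
  assert (Hsq : (1 + eps) ^ 2 < rho).
  { apply Rle_lt_trans with (1 + 3 * delta).
    - simpl. nra.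
    - lra. }
  eapply Rle_lt_trans; [exact Hle|]. rewrite Hid.
  replace c with (a0 * rho) by (unfold rho; field; lra).
  apply Rmult_lt_compat_l; auto.
Qed.

Lemma part3 p c : c < INR (S (S (S p))) / (INR (S (S (S p))) + 1) ->
  exists x, 0 < x /\ c < psi2_ratio (S (S (S p))) x.
Proof.
  intros Hc.
  destruct (Rle_or_lt c 0) as [Hc0|Hc0].
  { exists 1. split; [lra|]. destruct (part1 p 1 ltac:(lra)) as [Hl _].
    rewrite !S_INR in Hl. assert (0 <= INR p) by apply pos_INR.
    assert (0 < (INR p + 1 + 1 + 1 - 2) / (INR p + 1 + 1 + 1 - 1)) by (apply Rdiv_lt_0_compat; lra).
    lra. }
  rewrite !S_INR in Hc. set (q := INR p) in *.
  assert (Hq : 0 <= q) by apply pos_INR.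
  set (b0 := (q + 3) / (q + 4)).
  replace (q + 1 + 1 + 1) with (q + 3) in Hc by ring.
  replace (q + 3 + 1) with (q + 4) in Hc by ring. fold b0 in Hc.
  set (rho := b0 / c).
  assert (Hrho : 1 < rho).
  { unfold rho. apply (Rmult_lt_reg_r c); auto. unfold Rdiv. rewrite Rmult_assoc, Rinv_l by lra. lra. }
  assert (Sb0 := S_bounds 1 (S (S (S p))) ltac:(lra) ltac:(lia)).
  assert (Sb2 := S_bounds 1 (S (S (S (S (S p))))) ltac:(lra) ltac:(lia)).
  rewrite pow1 in Sb0, Sb2. rewrite Rinv_1 in Sb0, Sb2.
  set (C0 := 2 * Series (sig 1 (S (S (S p))))) in *.
  set (C2 := 2 * Series (sig 1 (S (S (S (S (S p))))))) in *.
  assert (HC0 : 0 <= C0) by (unfold C0; lra).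
  assert (HC2 : 0 <= C2) by (unfold C2; lra).
  set (D := C0 + C2).
  set (delta := Rmin 1 ((rho - 1) / 4)).
  assert (Hd : 0 < delta) by (apply Rmin_pos; lra).
  assert (Hd2 : delta <= (rho - 1) / 4) by apply Rmin_r.
  assert (Hd1 : delta <= 1) by apply Rmin_l.
  set (x := Rmin 1 (delta / (D + 1))).
  assert (Hx : 0 < x) by (apply Rmin_pos; [lra| apply Rdiv_lt_0_compat; unfold D; lra]).
  assert (Hx1 : x <= 1) by apply Rmin_l.
  assert (Hxd : x <= delta / (D + 1)) by apply Rmin_r.
  assert (HDx : D * x <= delta).
  { apply Rle_trans with (D * (delta / (D + 1))).
    - apply Rmult_le_compat_l; [unfold D; lra| auto].
    - apply (Rmult_le_reg_r (D + 1)); [unfold D; lra|].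
      replace (D * (delta / (D + 1)) * (D + 1)) with (D * delta) by (field; unfold D; lra).
      unfold D in *. nra. }
  exists x. split; auto.
  rewrite ratio_eq by auto.
  unfold Jv.
  assert (B0 := S_bounds x (S (S (S p))) ltac:(lra) ltac:(lia)).
  assert (B1 := S_bounds x (S (S (S (S p)))) ltac:(lra) ltac:(lia)).
  assert (B2 := S_bounds x (S (S (S (S (S p))))) ltac:(lra) ltac:(lia)).
  fold C0 in B0. fold C2 in B2.
  set (s0 := Series (sig x (S (S (S p))))) in *.
  set (s1 := Series (sig x (S (S (S (S p)))))) in *.
  set (s2 := Series (sig x (S (S (S (S (S p))))))) in *.
  set (X0 := x ^ S (S (S p))).
  assert (HX0 : 0 < X0) by (unfold X0; apply pow_lt; lra).
  assert (HX0x : X0 <= x).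
  { unfold X0. simpl. assert (0 <= x ^ p) by (apply pow_le; lra).
    assert (x ^ p <= 1) by (rewrite <- (pow1 p); apply pow_incr; lra).
    assert (h1 : x * x ^ p <= 1) by nra.
    assert (h2 : 0 <= x * x ^ p) by nra.
    assert (h3 : x * (x * x ^ p) <= 1) by nra.
    assert (h4 : 0 <= x * (x * x ^ p)) by nra.
    apply Rle_trans with (x * 1); [apply Rmult_le_compat_l; lra | lra]. }
  assert (E1 : x ^ S (S (S (S p))) = x * X0) by reflexivity.
  assert (E2 : x ^ S (S (S (S (S p)))) = x * (x * X0)) by reflexivity.
  rewrite E1 in B1. rewrite E2 in B2. fold X0 in B0.
  set (v0 := X0 * s0). set (v1 := x * X0 * s1). set (v2 := x * (x * X0) * s2).
  assert (Hv0 : 1 <= v0 <= 1 + D * x).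
  { unfold v0. destruct B0 as [B0a B0b]. split.
    - apply (Rmult_le_compat_l X0) in B0a; [|lra]. rewrite Rinv_r in B0a by lra. lra.
    - apply (Rmult_le_compat_l X0) in B0b; [|lra].
      replace (X0 * (/ X0 + C0)) with (1 + C0 * X0) in B0b by (field; lra).
      assert (C0 * X0 <= C0 * x) by (apply Rmult_le_compat_l; lra).
      assert (C0 * x <= D * x) by (unfold D; nra). lra. }
  assert (Hv1 : 1 <= v1).
  { unfold v1. destruct B1 as [B1a _].
    apply (Rmult_le_compat_l (x * X0)) in B1a; [|nra]. rewrite Rinv_r in B1a by nra. lra. }
  assert (Hv2 : 1 <= v2 <= 1 + D * x).
  { unfold v2. destruct B2 as [B2a B2b].
    assert (Hxx : 0 < x * (x * X0)) by (apply Rmult_lt_0_compat; [lra| apply Rmult_lt_0_compat; lra]). split.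
    - apply (Rmult_le_compat_l (x * (x * X0))) in B2a; [|lra]. rewrite Rinv_r in B2a by lra. lra.
    - apply (Rmult_le_compat_l (x * (x * X0))) in B2b; [|lra].
      replace (x * (x * X0) * (/ (x * (x * X0)) + C2)) with (1 + C2 * (x * (x * X0))) in B2b by (field; lra).
      assert (x * (x * X0) <= x) by nra.
      assert (C2 * (x * (x * X0)) <= C2 * x) by (apply Rmult_le_compat_l; lra).
      assert (C2 * x <= D * x) by (unfold D; nra). lra. }
  assert (Hid : (INR (fact (S (S (S p)))) * s1) ^ 2 /
                (INR (fact (S (S p))) * s0 * (INR (fact (S (S (S (S p))))) * s2))
                = b0 * (v1 ^ 2 / (v0 * v2))).
  { unfold b0, v0, v1, v2. rewrite !fact_simpl, !mult_INR, !S_INR. fold q.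
    assert (HF : INR (fact p) <> 0) by (apply Rgt_not_eq, INR_fact_lt_0).
    assert (Hs0 : s0 <> 0) by (apply Rgt_not_eq; apply Rlt_le_trans with (/ X0); [apply Rinv_0_lt_compat; lra| lra]).
    assert (Hs2 : s2 <> 0).
    { apply Rgt_not_eq; apply Rlt_le_trans with (/ (x * (x * X0))); [apply Rinv_0_lt_compat; apply Rmult_lt_0_compat; [lra| apply Rmult_lt_0_compat; lra]| lra]. }
    field. repeat split; lra. }
  rewrite Hid.
  assert (Hden : v0 * v2 <= (1 + D * x) ^ 2) by (simpl; nra).
  assert (Hsq : (1 + D * x) ^ 2 < rho).
  { apply Rle_lt_trans with (1 + 3 * delta); [| lra].
    assert (0 <= D * x) by (unfold D; nra). simpl. nra. }
  assert (Hb0 : 0 < b0) by (unfold b0; apply Rdiv_lt_0_compat; lra).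
  assert (Hr : / rho < v1 ^ 2 / (v0 * v2)).
  { assert (Hvv : 1 <= v0 * v2) by nra.
    apply Rlt_le_trans with (/ (v0 * v2)).
    - apply Rinv_lt_contravar; [apply Rmult_lt_0_compat; lra|]. lra.
    - unfold Rdiv. rewrite <- (Rmult_1_l (/ (v0 * v2))) at 1. apply Rmult_le_compat_r.
      + left. apply Rinv_0_lt_compat. nra.
      + simpl. nra. }
  replace c with (b0 * / rho) by (unfold rho; field; lra).
  apply Rmult_lt_compat_l; auto.
Qed.

Theorem corollary3p3 (n : nat) (hn : (3 <= n)%nat) :
  (forall x : R, 0 < x ->
     (INR n - 2) / (INR n - 1) < psi2_ratio n x /\
     psi2_ratio n x < INR n / (INR n + 1)) /\
  (forall c : R, (INR n - 2) / (INR n - 1) < c ->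
     exists x : R, 0 < x /\ psi2_ratio n x < c) /\
  (forall c : R, c < INR n / (INR n + 1) ->
     exists x : R, 0 < x /\ c < psi2_ratio n x).
Proof.
  destruct n as [|[|[|p]]]; try (exfalso; lia).
  split; [|split].
  - intros x Hx. apply part1; auto.
  - intros c Hc. apply part2; auto.
  - intros c Hc. apply part3; auto.
Qed.
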